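(* Every weight of a semi-invariant of $S(\mathfrak q)$ lies in $\bigoplus_{k=1}^{s-1}\mathbb Z\,\varpi_{\iota_k}$; i.e. $\Lambda(\mathfrak q)\subset\bigoplus_{\iota\in\{\iota_0,\dots,\iota_s\}}\mathbb Z\varpi_\iota$.
   Context: Setup (parabolic contractions of $\mathfrak{gl}_n$). Let $\mathbb C$ be an algebraically closed field of characteristic $0$ and $n\ge 2$. Let $e_{p,q}$ be the elementary matrices of $\mathfrak{gl}_n$, $I=\{1,\dots,n\}$. Fix $0=\iota_0<\iota_1<\dots<\iota_s=n$, $s\ge2$; $I_k=\{\iota_{k-1}+1,\dots,\iota_k\}$, $k(x)$ the index with $x\in I_{k(x)}$. $\mathfrak p=\operatorname{span}\{e_{p,q}: k(p)\le k(q)\}$, $\mathfrak n^-=\operatorname{span}\{e_{p,q}: k(p)>k(q)\}$; $\mathfrak q=\mathfrak p\ltimes\mathfrak n^-$ is $\mathfrak{gl}_n$ with bracket $[p_1,p_2]=p_1p_2-p_2p_1$, $[p,x]=\pi_{\mathfrak n^-}(px-xp)$, $[x,y]=0$ ($p,p_i\in\mathfrak p$, $x,y\in\mathfrak n^-$, $\pi_{\mathfrak n^-}$ projection onto $\mathfrak n^-$ along $\mathfrak p$). The adjoint action extends to $S(\mathfrak q)$ by derivations; a semi-invariant is a nonzero $f$ with $x\cdot f=\lambda(x)f$ for all $x$, $\lambda\in\mathfrak q^*$ its weight; $\Lambda(\mathfrak q)$ is the set of weights of semi-invariants. For $1\le\ell\le n-1$, $\varpi_\ell\in\mathfrak q^*$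 vanishes on the off-diagonal $e_{p,q}$ and $\varpi_\ell(\sum_u a_ue_{u,u})=\sum_{u\le\ell}a_u-\frac{\ell}{n}\sum_ua_u$; $\varpi_0=\varpi_n=0$. *)

(* Defs.v *)
From HB Require Import structures.
From mathcomp Require Import all_boot all_order all_algebra.
From mathcomp Require Import mpoly.
Set Implicit Arguments. Unset Strict Implicit. Unset Printing Implicit Defensive.
Import Order.TTheory GRing.Theory Num.Theory.
Local Open Scope ring_scope.

Section Parabolic.
Variables (F : fieldType) (n s : nat) (iota : nat -> nat).

(* k(x) for the 0-based index x : 'I_n (which is x+1 in the paper):
   the number of j in {0,..,s-1} with iota j <= x, i.e. the k with
   iota_(k-1) < x+1 <= iota_k when iota is strictly increasing. *)
Definition blk (x : 'I_n) : nat := (\sum_(j < s) (iota j <= x))%N.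

Definition proj_p (A : 'M[F]_n) : 'M[F]_n :=
  \matrix_(i, j) (if (blk i <= blk j)%N then A i j else 0).
Definition proj_n (A : 'M[F]_n) : 'M[F]_n :=
  \matrix_(i, j) (if (blk j < blk i)%N then A i j else 0).

(* the contracted bracket of q = p |x n^- on the space gl_n *)
Definition qbr (A B : 'M[F]_n) : 'M[F]_n :=
  let Ap := proj_p A in let An := proj_n A in
  let Bp := proj_p B in let Bn := proj_n B in
  (Ap *m Bp - Bp *m Ap)
  + proj_n (Ap *m Bn - Bn *m Ap)
  - proj_n (Bp *m An - An *m Bp).

(* S(q) = polynomial algebra on the coordinates; the variable indexed by
   mxvec_index p q stands for the basis vector e_{p,q} *)
Definition Sq := {mpoly F[n * n]}.

Definition var (p q : 'I_n) : Sq := 'X_(mxvec_index p q).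

Definition lin (A : 'M[F]_n) : Sq :=
  \sum_(p < n) \sum_(q < n) A p q *: var p q.

(* adjoint action of x in q on S(q), extended by derivations *)
Definition qact (x : 'M[F]_n) (f : Sq) : Sq :=
  \sum_(p < n) \sum_(q < n)
     lin (qbr x (delta_mx p q)) * mderiv (mxvec_index p q) f.

Definition semi_invariant (f : Sq) (lam : 'M[F]_n -> F) : Prop :=
  f != 0 /\ forall x : 'M[F]_n, qact x f = lam x *: f.

Definition is_weight (lam : 'M[F]_n -> F) : Prop :=
  (forall (a : F) (x y : 'M[F]_n), lam (a *: x + y) = a * lam x + lam y) /\
  exists f : Sq, semi_invariant f lam.

Definition varpi (l : nat) (x : 'M[F]_n) : F :=
  \sum_(u < n | (u < l)%N) x u u - (l%:R / n%:R) * \tr x.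

End Parabolic.

(* Main.v *)
Require Import Defs.
From HB Require Import structures.
From mathcomp Require Import all_boot all_order all_algebra.
From mathcomp Require Import mpoly.
From mathcomp Require Import ring zify.
Set Implicit Arguments. Unset Strict Implicit. Unset Printing Implicit Defensive.
Import Order.TTheory GRing.Theory Num.Theory.
Local Open Scope ring_scope.

Section Mx.
Variables (F : fieldType) (n s : nat) (iota : nat -> nat).
Local Notation M := ('M[F]_n).
Local Notation P := (@proj_p F n s iota).
Local Notation N := (@proj_n F n s iota).
Local Notation br := (@qbr F n s iota).

Definition cm (U V : M) : M := U *m V - V *m U.
Lemma cmE (U V : M) : cm U V = U *m V - V *m U. Proof. by []. Qed.
#[global] Opaque cm.

Lemma P_lin : linear P.
Proof. by move=> a A B; apply/matrixP=> i j; rewrite !mxE; case: ifP; rewrite ?mulr0 ?addr0. Qed.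
Lemma N_lin : linear N.
Proof. by move=> a A B; apply/matrixP=> i j; rewrite !mxE; case: ifP; rewrite ?mulr0 ?addr0. Qed.
HB.instance Definition _ := GRing.isLinear.Build F M M _ P P_lin.
HB.instance Definition _ := GRing.isLinear.Build F M M _ N N_lin.

Lemma PN (A : M) : P A + N A = A.
Proof. by apply/matrixP=> i j; rewrite !mxE; case: leqP; rewrite ?addr0 ?add0r. Qed.
Lemma PP (A : M) : P (P A) = P A.
Proof. by apply/matrixP=> i j; rewrite !mxE; case: ifP => // ->. Qed.
Lemma NN (A : M) : N (N A) = N A.
Proof. by apply/matrixP=> i j; rewrite !mxE; case: ifP => // ->. Qed.
Lemma NP (A : M) : N (P A) = 0.
Proof. by apply/matrixP=> i j; rewrite !mxE; case: leqP. Qed.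
Lemma PN0 (A : M) : P (N A) = 0.
Proof. by apply/matrixP=> i j; rewrite !mxE; case: leqP. Qed.

Lemma P_mul (X Y : M) : P X = X -> P Y = Y -> P (X *m Y) = X *m Y.
Proof.
move=> hX hY; apply/matrixP=> i j; rewrite mxE; case: ifP => // hij.
rewrite mxE big1 // => k _.
rewrite -hX -hY !mxE; case: (leqP (blk s iota i) (blk s iota k)) => hik.
  case: ifP; rewrite ?mulr0 // => hkj; by rewrite (leq_trans hik hkj) in hij.
by rewrite mul0r.
Qed.

Lemma P_cm (X Y : M) : P X = X -> P Y = Y -> P (cm X Y) = cm X Y.
Proof. by move=> hX hY; rewrite !cmE linearB /= !P_mul. Qed.

Lemma N_cm (X Y : M) : P X = X -> P Y = Y -> N (cm X Y) = 0.
Proof. by move=> hX hY; rewrite -(P_cm hX hY) NP. Qed.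

Lemma cmDr (X A B : M) : cm X (A + B) = cm X A + cm X B.
Proof. by rewrite !cmE mulmxDl mulmxDr opprD addrACA. Qed.
Lemma cmNr (X A : M) : cm X (- A) = - cm X A.
Proof. by rewrite !cmE mulmxN mulNmx opprB opprK addrC. Qed.
Lemma cmBr (X A B : M) : cm X (A - B) = cm X A - cm X B.
Proof. by rewrite cmDr cmNr. Qed.
Lemma cm_anti (X A : M) : cm A X = - cm X A.
Proof. by rewrite !cmE opprB. Qed.
Lemma cmr0 (X : M) : cm X 0 = 0.
Proof. by rewrite !cmE mulmx0 mul0mx subrr. Qed.

Lemma NcmN (X A : M) : P X = X -> N (cm X (N A)) = N (cm X A).
Proof.
move=> hX; by rewrite -{2}(PN A) cmDr [in RHS]linearD /= (N_cm hX (PP A)) add0r.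
Qed.
Lemma NcmN' (X A : M) : P X = X -> N (cm (N A) X) = N (cm A X).
Proof. by move=> hX; rewrite cm_anti [cm A X]cm_anti [LHS]linearN [RHS]linearN /= NcmN. Qed.

Lemma jacobi (x y z : M) : cm x (cm y z) - cm y (cm x z) = cm (cm x y) z.
Proof.
rewrite !cmE !mulmxBl !mulmxBr !mulmxA.
move: (x *m y *m z) (x *m z *m y) (y *m z *m x) (z *m y *m x) (y *m x *m z) (z *m x *m y) => a b c d e f.
apply/matrixP=> i j; rewrite !mxE; ring.
Qed.

Lemma qbrE (y C : M) : br y C = cm (P y) (P C) + N (cm (P y) (N C)) - N (cm (P C) (N y)).
Proof. by rewrite !cmE. Qed.

Lemma Nx0 (x : M) : P x = x -> N x = 0.
Proof. by move=> hx; rewrite -hx NP. Qed.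

Lemma qbr_p (x B : M) : P x = x -> br x B = cm x (P B) + N (cm x (N B)).
Proof. by move=> hx; rewrite qbrE hx (Nx0 hx) cmr0 linear0 subr0. Qed.

Lemma P_qbr_p (x B : M) : P x = x -> P (br x B) = cm x (P B).
Proof. by move=> hx; rewrite qbr_p // linearD /= PN0 addr0 P_cm // PP. Qed.

Lemma N_qbr_p (x B : M) : P x = x -> N (br x B) = N (cm x (N B)).
Proof. by move=> hx; rewrite qbr_p // linearD /= NN N_cm ?PP // add0r. Qed.

Lemma P_qbr (y B : M) : P (br y B) = cm (P y) (P B).
Proof. by rewrite qbrE linearB linearD /= !PN0 subr0 addr0 P_cm // PP. Qed.

Lemma N_qbr (y B : M) : N (br y B) = N (cm (P y) (N B)) - N (cm (P B) (N y)).
Proof. by rewrite qbrE linearB linearD /= !NN N_cm ?PP // add0r. Qed.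

Lemma qbr_jacobi (x y B : M) : P x = x ->
  br x (br y B) - br y (br x B) = br (br x y) B.
Proof.
move=> hx.
rewrite (qbr_p (br y B) hx) P_qbr N_qbr cmBr [N (_ - _)]linearB /= !NcmN //.
rewrite [br y (br x B)]qbrE P_qbr_p // N_qbr_p // (@NcmN (P y) (cm x (N B)) (PP y)).
rewrite [br (br x y) B]qbrE P_qbr_p // N_qbr_p // (@NcmN (P B) (cm x (N y)) (PP B)).
rewrite -!(jacobi x (P y)).
have J3 : cm (P B) (cm x (N y)) = cm x (cm (P B) (N y)) - cm (cm x (P B)) (N y).
  by rewrite -jacobi opprB addrC subrK.
rewrite J3 !(raddfB N).
move: (cm x (cm (P y) (P B))) (cm (P y) (cm x (P B))) (N (cm x (cm (P y) (N B))))
  (N (cm (P y) (cm x (N B)))) (N (cm x (cm (P B) (N y)))) (N (cm (cm x (P B)) (N y))) => a b c d e f.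
apply/matrixP=> i j; rewrite !mxE; ring.
Qed.
End Mx.

Section Pol.
Variables (F : fieldType) (n s : nat) (iota : nat -> nat).
Local Notation M := ('M[F]_n).
Local Notation P := (@proj_p F n s iota).
Local Notation N := (@proj_n F n s iota).
Local Notation br := (@qbr F n s iota).
Local Notation D := (@qact F n s iota).
Local Notation idx := (@mxvec_index n n).
Local Notation S := (Sq F n).

Lemma linE (A : M) : lin A = \sum_(p < n) \sum_(q < n) A p q *: var F p q.
Proof. by []. Qed.

Lemma lin_lin : linear (@lin F n).
Proof.
move=> a A B; rewrite /lin scaler_sumr -big_split; apply: eq_bigr => p _.
rewrite scaler_sumr -big_split; apply: eq_bigr => q _.
by rewrite !mxE scalerDl scalerA.
Qed.
HB.instance Definition _ := GRing.isLinear.Build F M S _ (@lin F n) lin_lin.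

Lemma cmDl (X A B : M) : cm (A + B) X = cm A X + cm B X.
Proof. by rewrite cm_anti cmDr opprD -!cm_anti. Qed.
Lemma cmZr (X A : M) a : cm X (a *: A) = a *: cm X A.
Proof. by rewrite !cmE -scalemxAr -scalemxAl scalerBr. Qed.
Lemma cmZl (X A : M) a : cm (a *: A) X = a *: cm A X.
Proof. by rewrite cm_anti cmZr -scalerN -cm_anti. Qed.

Lemma qbr_lin (x : M) : linear (br x).
Proof.
move=> a A B; rewrite !qbrE ![P (a *: A + B)]raddfD ![N (a *: A + B)]raddfD /=.
rewrite ![P (a *: A)]linearZ ![N (a *: A)]linearZ /=.
rewrite cmDr cmZr cmDl cmZl cmDr cmZr.
rewrite ![N (a *: _ + _)]raddfD /= ![N (a *: _)]linearZ /=.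
move: (cm (P x) (P A)) (cm (P x) (P B)) (N (cm (P x) (N A))) (N (cm (P x) (N B)))
  (N (cm (P A) (N x))) (N (cm (P B) (N x))) => a1 a2 a3 a4 a5 a6.
apply/matrixP=> i j; rewrite !mxE; ring.
Qed.

Lemma idx_eq (p q c d : 'I_n) : (idx p q == idx c d) = (p == c) && (q == d).
Proof.
rewrite /mxvec_index (inj_eq (@cast_ord_inj _ _ _)) (inj_eq (@enum_rank_inj _)).
by rewrite xpair_eqE.
Qed.

Lemma mderiv_var (c d p q : 'I_n) :
  mderiv (idx c d) (var F p q) = ((p == c) && (q == d))%:R.
Proof.
rewrite /var mderivX mnm1E idx_eq.
case: (p =P c) => [->|] /=; last by rewrite scale0r.
case: (q =P d) => [->|] /=; last by rewrite scale0r.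
have -> : (U_(idx c d) - U_(idx c d))%MM = 0%MM.
  by apply/mnmP => k; rewrite mnmBE subnn mnm0E.
by rewrite mpolyX0 scale1r.
Qed.

Lemma md_sum (i : 'I_(n * n)) (I : Type) (r : seq I) (Pr : pred I) (G : I -> S) :
  mderiv i (\sum_(j <- r | Pr j) G j) = \sum_(j <- r | Pr j) mderiv i (G j).
Proof. exact: (big_morph _ (mderivD i) (mderiv0 _ i)). Qed.

Lemma md_lin (c d : 'I_n) (A : M) : mderiv (idx c d) (lin A) =
   \sum_(p < n) \sum_(q < n) A p q *: mderiv (idx c d) (var F p q).
Proof.
rewrite linE; etransitivity; first exact: (big_morph _ (mderivD (idx c d)) (mderiv0 _ (idx c d))).
apply: eq_bigr => p _; etransitivity; first exact: (big_morph _ (mderivD (idx c d)) (mderiv0 _ (idx c d))).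
by apply: eq_bigr => q _; rewrite mderivZ.
Qed.

Lemma mderiv_lin (c d : 'I_n) (A : M) : mderiv (idx c d) (lin A) = (A c d)%:MP.
Proof.
rewrite md_lin (bigD1 c) //= [X in _ + X]big1 => [|p /negPf hp]; last first.
  by rewrite big1 // => q _; rewrite mderiv_var hp scaler0.
rewrite addr0 (bigD1 d) //= [X in _ + X]big1 => [|q /negPf hq]; last first.
  by rewrite mderiv_var hq andbF scaler0.
by rewrite addr0 mderiv_var !eqxx -alg_mpolyC.
Qed.

HB.instance Definition _ (x : M) := GRing.isLinear.Build F M M _ (br x) (qbr_lin x).

Lemma qactE (x : M) (f : S) : D x f =
  \sum_(p < n) \sum_(q < n) lin (br x (delta_mx p q)) * mderiv (idx p q) f.
Proof. by []. Qed.

Lemma qactD (x : M) (f g : S) : D x (f + g) = D x f + D x g.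
Proof.
rewrite !qactE -big_split; apply: eq_bigr => p _.
rewrite -big_split; apply: eq_bigr => q _.
by rewrite mderivD mulrDr.
Qed.

Lemma qactZ (x : M) (c : F) (f : S) : D x (c *: f) = c *: D x f.
Proof.
rewrite !qactE scaler_sumr; apply: eq_bigr => p _.
rewrite scaler_sumr; apply: eq_bigr => q _.
by rewrite mderivZ scalerAr.
Qed.

Lemma qact0 (x : M) : D x 0 = 0.
Proof. by rewrite qactE big1 // => p _; rewrite big1 // => q _; rewrite mderiv0 mulr0. Qed.

Lemma qactN (x : M) (f : S) : D x (- f) = - D x f.
Proof. by rewrite -scaleN1r qactZ scaleN1r. Qed.

Lemma qactB (x : M) (f g : S) : D x (f - g) = D x f - D x g.
Proof. by rewrite qactD qactN. Qed.

Lemma qact_sum (x : M) (I : Type) (r : seq I) (Pr : pred I) (G : I -> S) :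
  D x (\sum_(j <- r | Pr j) G j) = \sum_(j <- r | Pr j) D x (G j).
Proof. exact: (big_morph _ (qactD x) (qact0 x)). Qed.

Lemma qact_mul (x : M) (g h : S) : D x (g * h) = D x g * h + g * D x h.
Proof.
rewrite !qactE [in RHS]mulr_suml [in RHS]mulr_sumr -big_split; apply: eq_bigr => p _.
rewrite [in RHS]mulr_suml [in RHS]mulr_sumr -big_split; apply: eq_bigr => q _.
by rewrite /= mderivM; ring.
Qed.

Lemma lin_sum2 (G : 'I_n -> 'I_n -> M) :
  lin (\sum_(p < n) \sum_(q < n) G p q) = \sum_(p < n) \sum_(q < n) lin (G p q).
Proof. by rewrite linear_sum; apply: eq_bigr => p _; rewrite linear_sum. Qed.

Lemma qact_lin (x : M) (A : M) : D x (lin A) = lin (br x A).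
Proof.
rewrite qactE {2}(matrix_sum_delta A).
have -> : br x (\sum_(p < n) \sum_(q < n) A p q *: delta_mx p q) =
    \sum_(p < n) \sum_(q < n) A p q *: br x (delta_mx p q).
  rewrite linear_sum; apply: eq_bigr => p _.
  by rewrite linear_sum; apply: eq_bigr => q _; rewrite linearZ.
rewrite lin_sum2; apply: eq_bigr => p _; apply: eq_bigr => q _.
by rewrite mderiv_lin mulrC mul_mpolyC linearZ.
Qed.

Lemma swap4 (G : 'I_n -> 'I_n -> 'I_n -> 'I_n -> S) :
  \sum_(a < n) \sum_(b < n) \sum_(c < n) \sum_(d < n) G a b c d =
  \sum_(c < n) \sum_(d < n) \sum_(a < n) \sum_(b < n) G a b c d.
Proof.
rewrite [LHS]pair_big [RHS]pair_big /=.
under eq_bigr do rewrite pair_big /=.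
under [RHS]eq_bigr do rewrite pair_big /=.
exact: exchange_big.
Qed.

End Pol.

Section Pol.
Variables (F : fieldType) (n s : nat) (iota : nat -> nat).
Local Notation M := ('M[F]_n).
Local Notation br := (@qbr F n s iota).
Local Notation D := (@qact F n s iota).
Local Notation idx := (@mxvec_index n n).
Local Notation S := (Sq F n).

Definition L (w : M) (p q : 'I_n) : S := lin (br w (delta_mx p q)).

Definition Tm (f : S) (u v : M) : S :=
  \sum_(p < n) \sum_(q < n) \sum_(c < n) \sum_(d < n)
    L v p q * L u c d * mderiv (idx c d) (mderiv (idx p q) f).

Lemma Tm_sym (f : S) (u v : M) : Tm f u v = Tm f v u.
Proof.
rewrite /Tm [LHS]swap4.
apply: eq_bigr => p _; apply: eq_bigr => q _.
apply: eq_bigr => c _; apply: eq_bigr => d _.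
by rewrite mderiv_comm [L u _ _ * _]mulrC.
Qed.

Lemma qact2 (f : S) (u v : M) : D u (D v f) =
  \sum_(p < n) \sum_(q < n) lin (br u (br v (delta_mx p q))) * mderiv (idx p q) f
  + Tm f u v.
Proof.
rewrite [D v f]qactE qact_sum /Tm -big_split /=; apply: eq_big => // p _.
rewrite qact_sum -big_split /=; apply: eq_big => // q _.
rewrite /= qact_mul qact_lin.
rewrite [X in _ = _ + X](_ : _ = L v p q * D u (mderiv (idx p q) f)) //.
rewrite [D u _]qactE mulr_sumr; apply: eq_big => // c _.
rewrite mulr_sumr; apply: eq_big => // d _.
by rewrite mulrA.
Qed.

Lemma qact_comm (x y Z : M) (f : S) :
  (forall B, br x (br y B) - br y (br x B) = br Z B) ->
  D x (D y f) - D y (D x f) = D Z f.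
Proof.
move=> hZ; rewrite (qact2 f x y) (qact2 f y x) (Tm_sym f x y).
have E : forall a b t : S, (a + t) - (b + t) = a - b.
  by move=> a b t; rewrite opprD addrACA subrr addr0.
rewrite E.
rewrite qactE -sumrB; apply: eq_bigr => p _.
rewrite -sumrB; apply: eq_bigr => q _.
by rewrite -mulrBl -linearB /= hZ.
Qed.
End Pol.

Section Fin.
Variables (F : fieldType) (n s : nat) (iota : nat -> nat).
Hypothesis (i0 : iota 0%N = 0%N) (is_ : iota s = n)
  (mono1 : forall k : nat, (k < s)%N -> (iota k < iota k.+1)%N).

Lemma mono (k l : nat) : (k < l)%N -> (l <= s)%N -> (iota k < iota l)%N.
Proof.
elim: l => // l IH; rewrite ltnS leq_eqVlt => /orP [/eqP -> hl|hkl hl].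
  exact: mono1.
apply: ltn_trans (IH hkl (ltnW hl)) (mono1 hl).
Qed.

Lemma iota_inj (k l : nat) : (k <= s)%N -> (l <= s)%N -> iota k = iota l -> k = l.
Proof.
move=> hk hl h; case: (ltngtP k l) => // hkl.
  by have := mono hkl hl; rewrite h ltnn.
by have := mono hkl hk; rewrite h ltnn.
Qed.

Lemma iota_lt (k : nat) : (k < s)%N -> (iota k < n)%N.
Proof. by move=> hk; rewrite -is_; apply: mono. Qed.

Lemma blk_succ (v : nat) (hv : (v < n)%N) (hv1 : (v.+1 < n)%N) :
  (forall k, (k < s)%N -> iota k != v.+1) ->
  blk s iota (Ordinal hv) = blk s iota (Ordinal hv1).
Proof.
move=> h; rewrite /blk; apply: eq_bigr => j _ /=.
by rewrite [in RHS]leq_eqVlt ltnS (negPf (h j (ltn_ord j))).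
Qed.

Lemma sum_lt (m : nat) : (m <= n)%N -> \sum_(u < n | (u < m)%N) (1 : F) = m%:R.
Proof.
move=> hm; rewrite -(big_mkord (fun u => (u < m)%N) (fun _ => (1:F))).
rewrite (big_cat_nat (leq0n m) hm) /=.
rewrite [X in _ + X]big1_seq ?addr0; last first.
  move=> i /andP [hi]; rewrite mem_index_iota => /andP [hmi _].
  by rewrite leqNgt hi in hmi.
rewrite -big_filter.
have -> : [seq i <- index_iota 0 m | (i < m)%N] = index_iota 0 m.
  apply/all_filterP/allP => i; by rewrite mem_index_iota.
by rewrite big_const_nat subn0 iter_addr addr0.
Qed.

Variable (Dv : 'I_n -> F).
Hypothesis hblk : forall v w : 'I_n, blk s iota v = blk s iota w -> Dv v = Dv w.
Hypothesis hsum : \sum_(u < n) Dv u = 0.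
Hypothesis hn : n%:R != 0 :> F.

Definition Dn (v : nat) : F := \sum_(u < n | val u == v) Dv u.

Lemma DnE (u : 'I_n) : Dn u = Dv u.
Proof. by rewrite /Dn (big_pred1 u) // => w /=; rewrite val_eqE. Qed.

Definition cc (k : nat) : F := Dn (iota k).-1 - Dn (iota k).
Definition G (u : nat) : F := \sum_(1 <= k < s) (if (u < iota k)%N then cc k else 0).

Lemma step (u : nat) : (u.+1 < n)%N ->
  \sum_(1 <= k < s) (if iota k == u.+1 then cc k else 0) = Dn u - Dn u.+1.
Proof.
move=> hu.
case: (boolP (has (fun k => iota k == u.+1) (index_iota 1 s))) => [/hasP [k0 hk0 /eqP e0] | /hasPn hno].
  have hk0s : (k0 <= s)%N by move: hk0; rewrite mem_index_iota => /andP [_ /ltnW].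
  rewrite (@eq_big_nat _ _ _ 1 s _ (fun k => if k == k0 then cc k else 0)); last first.
    move=> k /andP [_ /ltnW hks].
    case: (k =P k0) => [->|ne]; first by rewrite e0 eqxx.
    case: (iota k =P u.+1) => // e; case: ne; apply: iota_inj => //.
    by rewrite e e0.
  rewrite -big_mkcond big_nat1_eq -mem_index_iota hk0 /cc e0 /=.
  done.
rewrite big1_seq; last first.
  by move=> k /andP [_ hk]; rewrite (negPf (hno k hk)).
have hv : (u < n)%N by apply: ltnW.
rewrite (DnE (Ordinal hv)) (DnE (Ordinal hu)) (hblk (blk_succ hv hu _)) ?subrr //.
move=> k hk; case: k hk => [|k] hk; first by rewrite i0.
by apply: hno; rewrite mem_index_iota.
Qed.

Lemma Gval (u : nat) : (u < n)%N -> G u = Dn u - Dn n.-1.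
Proof.
move=> hu; move: {2}(n.-1 - u)%N (erefl (n.-1 - u)%N) => t.
elim: t u hu => [|t IH] u hu ht.
  have -> : u = n.-1 by lia.
  rewrite subrr /G big1_seq // => k /andP [_]; rewrite mem_index_iota => /andP [_ hk].
  have h := iota_lt hk.
  by case: ifP => // h2; lia.
have hu1 : (u.+1 < n)%N by lia.
have -> : G u = G u.+1 + \sum_(1 <= k < s) (if iota k == u.+1 then cc k else 0).
  rewrite /G -big_split; apply: eq_bigr => k _ /=.
  by case: (ltngtP u.+1 (iota k)) => h; rewrite ?addr0 ?add0r.
by rewrite IH // ?step //; [ring | lia].
Qed.

Lemma exch (h : 'I_n -> F) :
  \sum_(1 <= k < s) cc k * \sum_(u < n | (u < iota k)%N) h u = \sum_(u < n) h u * G u.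
Proof.
under eq_bigr => k _ do rewrite big_mkcond mulr_sumr.
rewrite exchange_big; apply: eq_bigr => u _; rewrite /G mulr_sumr; apply: eq_bigr => k _.
by case: ifP => _; rewrite ?mulr0 // mulrC.
Qed.

Lemma final_id (x : 'M[F]_n) :
  \sum_(u < n) Dv u * x u u = \sum_(1 <= k < s) cc k * varpi (iota k) x.
Proof.
have vE : forall l, varpi l x = \sum_(u < n | (u < l)%N) x u u - (l%:R / n%:R) * \tr x by [].
have trE : \tr x = \sum_(u < n) x u u by [].
under [RHS]eq_bigr do rewrite vE mulrBr.
rewrite sumrB exch.
have E2 : \sum_(1 <= k < s) cc k * ((iota k)%:R / n%:R * \tr x) =
    (\sum_(1 <= k < s) cc k * (iota k)%:R) * (n%:R^-1 * \tr x).
  by rewrite mulr_suml; apply: eq_bigr => k _; rewrite !mulrA.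
have E3 : \sum_(1 <= k < s) cc k * (iota k)%:R = - (n%:R * Dn n.-1).
  rewrite (@eq_big_nat _ _ _ 1 s _ (fun k => cc k * \sum_(u < n | (u < iota k)%N) 1)); last first.
    by move=> k /andP [_ hk]; rewrite sum_lt // ltnW // iota_lt.
  rewrite exch (eq_bigr (fun u : 'I_n => Dv u - Dn n.-1)); last first.
    by move=> u _; rewrite mul1r Gval // DnE.
  by rewrite sumrB hsum sumr_const card_ord add0r mulr_natl.
have E1 : \sum_(u < n) x u u * G u = \sum_(u < n) Dv u * x u u - Dn n.-1 * \tr x.
  rewrite trE mulr_sumr -sumrB; apply: eq_bigr => u _.
  by rewrite Gval // DnE; ring.
rewrite E2 E3 E1; field.
done.
Qed.
End Fin.

Section Main.
Variables (F : fieldType) (n s : nat) (iota : nat -> nat).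
Local Notation M := ('M[F]_n).
Local Notation P := (@proj_p F n s iota).
Local Notation N := (@proj_n F n s iota).
Local Notation br := (@qbr F n s iota).
Local Notation D := (@qact F n s iota).
Local Notation idx := (@mxvec_index n n).
Local Notation S := (Sq F n).
Local Notation bk := (@blk n s iota).

Lemma delta_P (a b : 'I_n) : (bk a <= bk b)%N -> P (delta_mx a b) = delta_mx a b.
Proof.
move=> hab; apply/matrixP => i j; rewrite !mxE; case: ifP => // hij.
by case: (i =P a) => [ei|] //=; case: (j =P b) => [ej|] //=; rewrite ei ej hab in hij.
Qed.

Lemma dmulE (u i j : 'I_n) (B : M) : (delta_mx u u *m B) i j = (i == u)%:R * B i j.
Proof.
rewrite mxE (bigD1 u) //= big1 => [|k /negPf hk]; last by rewrite mxE hk andbF mul0r.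
by rewrite mxE eqxx andbT addr0; case: (i =P u) => [->|] //; rewrite !mul0r.
Qed.

Lemma muldE (u i j : 'I_n) (B : M) : (B *m delta_mx u u) i j = (j == u)%:R * B i j.
Proof.
rewrite mxE (bigD1 u) //= big1 => [|k /negPf hk]; last by rewrite mxE hk mulr0.
by rewrite mxE eqxx addr0; case: (j =P u) => [->|] //=; rewrite ?mulr1 ?mul1r ?mulr0 ?mul0r.
Qed.

Lemma cm_diag (u : 'I_n) (B : M) :
  cm (delta_mx u u) B = \matrix_(i, j) (((i == u)%:R - (j == u)%:R) * B i j).
Proof.
rewrite cmE; apply/matrixP => i j.
have -> : (delta_mx u u *m B - B *m delta_mx u u) i j =
  (delta_mx u u *m B) i j - (B *m delta_mx u u) i j by rewrite !mxE.
rewrite dmulE muldE [RHS]mxE; ring.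
Qed.

Lemma qbr_diag (u : 'I_n) (B : M) :
  br (delta_mx u u) B = \matrix_(i, j) (((i == u)%:R - (j == u)%:R) * B i j).
Proof.
rewrite qbr_p ?delta_P // !cm_diag; apply/matrixP => i j; rewrite !mxE.
by case: leqP => _; rewrite ?mulr0 ?addr0 ?add0r.
Qed.

Lemma br_off (p q : 'I_n) : p != q -> br (delta_mx p p) (delta_mx p q) = delta_mx p q.
Proof.
move=> hpq; rewrite qbr_diag; apply/matrixP => i j; rewrite !mxE.
case: (i =P p) => [_|_] /=; last by rewrite mulr0.
case: (j =P q) => [->|_] /=; last by rewrite mulr0.
by rewrite eq_sym (negPf hpq) subr0 mulr1.
Qed.

Lemma br_blk (a b : 'I_n) : bk a = bk b ->
  br (delta_mx a b) (delta_mx b a) = delta_mx a a - delta_mx b b.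
Proof.
move=> e.
have ha : P (delta_mx a b) = delta_mx a b by apply: delta_P; rewrite e.
have hb : P (delta_mx b a) = delta_mx b a by apply: delta_P; rewrite e.
rewrite qbrE ha hb (Nx0 ha) cmr0 (Nx0 hb) cmr0 linear0 subr0 addr0.
by rewrite cmE !mul_delta_mx.
Qed.

Lemma lin_delta (a b : 'I_n) : lin (delta_mx a b) = var F a b.
Proof.
rewrite linE (bigD1 a) //= [X in _ + X]big1 => [|p /negPf hp]; last first.
  by rewrite big1 // => q _; rewrite mxE hp scale0r.
rewrite addr0 (bigD1 b) //= [X in _ + X]big1 => [|q /negPf hq]; last first.
  by rewrite mxE hq andbF scale0r.
by rewrite addr0 mxE !eqxx scale1r.
Qed.

Lemma qact_diag (u : 'I_n) (f : S) : D (delta_mx u u) f =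
  \sum_(a < n) \sum_(b < n) ((a == u)%:R - (b == u)%:R) *: (var F a b * mderiv (idx a b) f).
Proof.
rewrite qactE; apply: eq_bigr => a _; apply: eq_bigr => b _.
have -> : br (delta_mx u u) (delta_mx a b) = ((a == u)%:R - (b == u)%:R) *: delta_mx a b.
  rewrite qbr_diag; apply/matrixP => i j; rewrite !mxE.
  by case: (i =P a) => [->|]; case: (j =P b) => [->|] //=; rewrite ?mulr0 ?andbF.
by rewrite linearZ /= lin_delta scalerAl.
Qed.

Lemma coefXd' (i : 'I_(n * n)) (g : S) (m : 'X_{1..n * n}) :
  ('X_i * mderiv i g)@_m = g@_m *+ m i.
Proof.
case: (posnP (m i)) => hm.
  rewrite hm mulr0n; apply/eqP; rewrite -[_ == 0]negbK -mcoeff_msupp.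
  rewrite mulrC (perm_mem (msuppMX _ _)); apply/negP => /mapP [m' _ e].
  by move: hm; rewrite e mnmDE mnm1E eqxx.
have e : m = (U_(i) + (m - U_(i)))%MM by rewrite addmC submK // lep1mP -lt0n.
rewrite {1}e mulrC mcoeffMX mcoeff_deriv submK ?lep1mP -?lt0n //.
by rewrite mnmBE mnm1E eqxx subn1 prednK.
Qed.
End Main.

Unset Implicit Arguments.
Theorem mainTheorem6 (F : closedFieldType) (n s : nat) (iota : nat -> nat) :
  [pchar F] =i pred0 ->
  (2 <= n)%N -> (2 <= s)%N ->
  iota 0%N = 0%N -> iota s = n ->
  (forall k : nat, (k < s)%N -> (iota k < iota k.+1)%N) ->
  forall lam : 'M[F]_n -> F,
    is_weight s iota lam ->
    exists c : nat -> int,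
      forall x : 'M[F]_n,
        lam x = \sum_(1 <= k < s) (c k)%:~R * varpi (iota k) x.
Proof.
move=> hchar hn2 hs2 i0 is_ mono1 lam [hlin [f [fne hf]]].
have lamD x y : lam (x + y) = lam x + lam y.
  by have := hlin 1 x y; rewrite scale1r mul1r.
have lam0 : lam 0 = 0.
  have := hlin 1 0 0; rewrite scale1r addr0 mul1r => /esym/eqP.
  by rewrite -subr_eq0 addrK => /eqP.
have lamZ a x : lam (a *: x) = a * lam x.
  by have := hlin a x 0; rewrite addr0 lam0 addr0.
have lamB x y : lam (x - y) = lam x - lam y.
  by rewrite -scaleN1r lamD lamZ mulN1r.
have lam_br : forall x y : 'M[F]_n, proj_p s iota x = x -> lam (qbr s iota x y) = 0.
  move=> x y hx.
  have := qact_comm f (fun B => qbr_jacobi y B hx).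
  rewrite (hf y) (hf x) !qactZ (hf x) (hf y) !scalerA mulrC subrr (hf (qbr s iota x y)).
  by move/esym/eqP; rewrite scaler_eq0 (negPf fne) orbF => /eqP.
have off : forall p q : 'I_n, p != q -> lam (delta_mx p q) = 0.
  move=> p q hpq; rewrite -(br_off F s iota hpq); apply: lam_br; exact: delta_P.
have blkeq : forall v w : 'I_n, blk s iota v = blk s iota w ->
    lam (delta_mx v v) = lam (delta_mx w w).
  move=> v w e; apply/eqP; rewrite -subr_eq0 -lamB -(br_blk F e); apply/eqP.
  by apply: lam_br; apply: delta_P; rewrite e.
set m := mlead f.
have hm : f@_m != 0 by rewrite mleadc_eq0.
pose w (u : 'I_n) : F := \sum_(a < n) \sum_(b < n)
   ((a == u)%:R - (b == u)%:R) * (m (mxvec_index a b))%:R.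
have wu : forall u : 'I_n, lam (delta_mx u u) = w u.
  move=> u; have := congr1 (mcoeff m) (hf (delta_mx u u)).
  rewrite qact_diag mcoeffZ.
  rewrite (big_morph _ (mcoeffD m) (mcoeff0 _ m)).
  under eq_bigr => a _ do rewrite (big_morph _ (mcoeffD m) (mcoeff0 _ m)).
  under eq_bigr => a _ do under eq_bigr => b _ do rewrite mcoeffZ /var coefXd'.
  move=> e; apply: (mulIf hm); rewrite -e /w mulr_suml; apply: eq_bigr => a _.
  rewrite mulr_suml; apply: eq_bigr => b _.
  by rewrite -mulr_natr; ring.
pose Dv (u : 'I_n) : F := lam (delta_mx u u).
pose dd (u : 'I_n) : int := \sum_(a < n) \sum_(b < n)
   ((a == u)%:Z - (b == u)%:Z) * (m (mxvec_index a b))%:Z.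
have intr0 : (0 : int)%:~R = 0 :> F by [].
have hDd : forall u, Dv u = (dd u)%:~R.
  move=> u; rewrite /Dv wu /w /dd (big_morph _ (@intrD F) intr0).
  apply: eq_bigr => a _; rewrite (big_morph _ (@intrD F) intr0).
  apply: eq_bigr => b _; rewrite intrM intrB !pmulrn.
  done.
have hsum : \sum_(u < n) Dv u = 0.
  rewrite /Dv; under eq_bigr => u _ do rewrite wu /w.
  rewrite exchange_big big1 // => a _.
  rewrite exchange_big big1 // => b _.
  rewrite -mulr_suml sumrB.
  have one : forall c : 'I_n, \sum_(u < n) ((c == u)%:R : F) = 1.
    move=> c; rewrite (bigD1 c) //= big1 ?addr0 ?eqxx // => u /negPf.
    by rewrite eq_sym => ->.
  by rewrite !one subrr mul0r.
have hn : n%:R != 0 :> F.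
  by rewrite ((pcharf0P F).1 hchar n) -lt0n; apply: ltnW.
have key := final_id i0 is_ mono1 (Dv := Dv) blkeq hsum hn.
pose dn (v : nat) : int := \sum_(u < n | val u == v) dd u.
have hdn : forall v, (dn v)%:~R = Dn Dv v.
  move=> v; rewrite /dn /Dn (big_morph _ (@intrD F) intr0).
  by apply: eq_bigr => u _; rewrite hDd.
exists (fun k => dn (iota k).-1 - dn (iota k)) => x.
have -> : lam x = \sum_(u < n) Dv u * x u u.
  rewrite {1}(matrix_sum_delta x) (big_morph _ lamD lam0).
  apply: eq_bigr => i _; rewrite (big_morph _ lamD lam0).
  rewrite (bigD1 i) //= big1 ?addr0; last first.
    by move=> j hj; rewrite lamZ off ?mulr0 // eq_sym.
  by rewrite lamZ mulrC.
rewrite key; apply: eq_bigr => k _.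
by rewrite intrB !hdn.
Qed.
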